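(* Let $\mathbf R=\{R_i,t_i\}_{i\ge0}$ be a purely inseparable tower arising from a pair $(R,I_0)$ such that every $i$-th Frobenius projection $F_i\colon R_{i+1}/I_0R_{i+1}\to R_i/I_0R_i$ is surjective. Then the induced tower of $\mathbb F_p$-algebras $(R_0/I_0)_{\mathrm{red}}\to(R_1/I_0R_1)_{\mathrm{red}}\to\cdots\to(R_i/I_0R_i)_{\mathrm{red}}\to\cdots$ (transition maps induced by the $t_i$) is a perfect tower.
   Context: Fix a prime $p$; rings are commutative with $1$; $\varphi$ is absolute Frobenius. A tower of rings $\{R_i,t_i\}_{i\ge0}$ is a sequence of ring maps $R_0\xrightarrow{t_0}R_1\to\cdots$. For a ring $R$ and ideal $I_0$, write $\overline{R_i}=R_i/I_0R_i$ and $\overline{t_i}$ for induced maps. A purely inseparable tower arising from $(R,I_0)$ is a tower with (a) $R_0=R$, $p\in I_0$; (b) each $\overline{t_i}$ injective; (c) $\varphi(\overline{R_{i+1}})\subset\overline{t_i}(\overline{R_i})$; the $i$-th Frobenius projection $F_i\colon\overline{R_{i+1}}\to\overline{R_i}$ is the unique ring map with $\overline{t_i}\circ F_i=\varphi$. A perfect tower is a tower isomorphic (as an inductive system of rings) to $A\xrightarrow{\varphi}A\xrightarrow{\varphi}\cdots$ for a reduced $\mathbb F_p$-algebra $A$. *)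

(* Defs.v *)
From HB Require Import structures.
From mathcomp Require Import all_boot all_order all_algebra.
Set Implicit Arguments. Unset Strict Implicit. Unset Printing Implicit Defensive.
Import GRing.Theory.
Local Open Scope ring_scope.

Record tower := Tower {
  tw_ring : nat -> comPzRingType;
  tw_map : forall i, {rmorphism tw_ring i -> tw_ring i.+1} }.

Fixpoint tw_comp (T : tower) (i : nat) : tw_ring T 0 -> tw_ring T i :=
  match i with
  | 0 => fun x => x
  | i'.+1 => fun x => @tw_map T i' (@tw_comp T i' x)
  end.

Definition is_ideal (R : comPzRingType) (I : R -> Prop) : Prop :=
  [/\ I 0, (forall x y, I x -> I y -> I (x + y)) & (forall a x, I x -> I (a * x))].

Definition ext_ideal (T : tower) (I0 : tw_ring T 0 -> Prop) (i : nat)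
  (y : tw_ring T i) : Prop :=
  exists s : seq (tw_ring T i * tw_ring T 0),
    (forall u, u \in s -> I0 u.2) /\ y = \sum_(u <- s) u.1 * @tw_comp T i u.2.

(* the radical of I_0 R_i, i.e. the kernel of R_i -> (R_i / I_0 R_i)_red *)
Definition rad_ext_ideal (T : tower) (I0 : tw_ring T 0 -> Prop) (i : nat)
  (y : tw_ring T i) : Prop :=
  exists n : nat, @ext_ideal T I0 i (y ^+ n).

Definition purely_inseparable_tower (p : nat) (T : tower)
  (I0 : tw_ring T 0 -> Prop) : Prop :=
  [/\ @is_ideal (tw_ring T 0) I0, I0 (p%:R),
      (* (b): t_i-bar injective *)
      (forall i (x : tw_ring T i), @ext_ideal T I0 i.+1 (@tw_map T i x) ->
          @ext_ideal T I0 i x) &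
      (* (c): Frobenius of R_{i+1}-bar lands in the image of t_i-bar *)
      (forall i (y : tw_ring T i.+1), exists x : tw_ring T i,
          @ext_ideal T I0 i.+1 (y ^+ p - @tw_map T i x))].

(* The i-th Frobenius projection F_i is surjective: every class x-bar in
   R_i-bar is F_i(y-bar) for some y, i.e. t_i-bar(x-bar) = y-bar^p. *)
Definition frobenius_projections_surjective (p : nat) (T : tower)
  (I0 : tw_ring T 0 -> Prop) : Prop :=
  forall i (x : tw_ring T i), exists y : tw_ring T i.+1,
    @ext_ideal T I0 i.+1 (y ^+ p - @tw_map T i x).

Definition reduced_ring (A : comPzRingType) : Prop :=
  forall (a : A) (n : nat), a ^+ n = 0 -> a = 0.

(* The tower B_i := (R_i / I_0 R_i)_red, with maps induced by t_i, is a perfect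
   tower: there is a reduced F_p-algebra A and ring isomorphisms
   psi_i : B_i ~= A with psi_{i+1} o tbar_i = Frob o psi_i.  A ring isomorphism
   psi_i : R_i / rad(I_0 R_i) ~= A is encoded by the composite
   theta_i : R_i -> A, a surjective ring map whose kernel is exactly
   rad(I_0 R_i). *)
Definition reduced_quotient_tower_is_perfect (p : nat) (T : tower)
  (I0 : tw_ring T 0 -> Prop) : Prop :=
  exists (A : comPzRingType) (theta : forall i, {rmorphism tw_ring T i -> A}),
    [/\ (p%:R : A) = 0, reduced_ring A,
        (forall i, forall a : A, exists x : tw_ring T i, theta i x = a),
        (forall i (x : tw_ring T i), theta i x = 0 <-> @rad_ext_ideal T I0 i x) &
        (forall i (x : tw_ring T i), theta i.+1 (@tw_map T i x) = theta i x ^+ p)].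

(* Main.v *)
From HB Require Import structures.
Require Import Defs.
From mathcomp Require Import all_boot all_order all_algebra.
From Stdlib Require Import ClassicalEpsilon.
From mathcomp Require Import ring.
Set Implicit Arguments. Unset Strict Implicit. Unset Printing Implicit Defensive.
Import GRing.Theory.
Local Open Scope ring_scope.
Local Open Scope quotient_scope.

Definition pb (P : Prop) : bool := if excluded_middle_informative P then true else false.
Lemma pbP (P : Prop) : reflect P (pb P).
Proof. rewrite /pb; case: excluded_middle_informative => h; constructor => //. Qed.

Record ideal_pack (R : comPzRingType) := IdealPack {
  ip_pred : R -> Prop;
  ip0 : ip_pred 0;
  ipD : forall x y, ip_pred x -> ip_pred y -> ip_pred (x + y);
  ipM : forall a x, ip_pred x -> ip_pred (a * x) }.

Section Q.
Variables (R : comPzRingType) (J : ideal_pack R).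
Local Notation I := (ip_pred J).
Let I0 := ip0 J.
Let ID := @ipD R J.
Let IM := @ipM R J.

Lemma IN x : I x -> I (- x).
Proof. by move=> h; rewrite -mulN1r; apply: IM. Qed.

Definition qequiv (x y : R) := pb (I (x - y)).

Lemma qequiv_is_equiv : equiv_class_of qequiv.
Proof.
split=> [x|x y|y x z]; rewrite /qequiv.
- by rewrite subrr; apply/pbP.
- by apply/pbP/pbP => h; rewrite -opprB; apply: IN.
- move=> /pbP h1 /pbP h2; apply/pbP.
  by have := ID h1 h2; rewrite addrA subrK.
Qed.

Canonical qequiv_equiv := EquivRelPack qequiv_is_equiv.
Canonical qequiv_encModRel := defaultEncModRel qequiv.

Definition quot := {eq_quot qequiv}.

HB.instance Definition _ : EqQuotient R qequiv quot := EqQuotient.on quot.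
HB.instance Definition _ := Choice.on quot.

Lemma eqmodE x y : (x == y %[mod quot]) = pb (I (x - y)).
Proof. by rewrite piE. Qed.

Lemma pieqP x y : reflect (I (x - y)) (\pi_quot x == \pi_quot y).
Proof. by rewrite eqmodE; apply: pbP. Qed.

Lemma pieq x y : I (x - y) -> \pi_quot x = \pi_quot y.
Proof. by move=> h; apply/eqP/pieqP. Qed.

Lemma reprI (x : R) : I (repr (\pi_quot x) - x).
Proof. by apply/pieqP; rewrite reprK. Qed.

Definition zero : quot := \pi_quot 0.
Definition add : quot -> quot -> quot := locked (fun a b => \pi_quot (repr a + repr b)).
Definition opp : quot -> quot := locked (fun a => \pi_quot (- repr a)).

Lemma pi_opp x : \pi_quot (- x) = opp (\pi_quot x).
Proof. by rewrite /opp -lock; apply: pieq; rewrite opprK addrC; apply: reprI. Qed.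

Lemma pi_add x y : \pi_quot (x + y) = add (\pi_quot x) (\pi_quot y).
Proof.
rewrite /add -lock; apply: pieq.
have -> : x + y - (repr (\pi_quot x) + repr (\pi_quot y)) =
  - ((repr (\pi_quot x) - x) + (repr (\pi_quot y) - y)).
  by ring.
by apply: IN; apply: ID; apply: reprI.
Qed.

Lemma addqA: associative add.
Proof.
move=> x y z; elim/quotW: x => a; elim/quotW: y => b; elim/quotW: z => c.
by rewrite -!pi_add addrA.
Qed.
Lemma addqC: commutative add.
Proof. by move=> x y; elim/quotW: x => a; elim/quotW: y => b; rewrite -!pi_add addrC. Qed.
Lemma add0q: left_id zero add.
Proof. by move=> x; elim/quotW: x => a; rewrite /zero -!pi_add add0r. Qed.
Lemma addNq: left_inverse zero opp add.
Proof. by move=> x; elim/quotW: x => a; rewrite -pi_opp -pi_add addNr. Qed.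

HB.instance Definition _ := GRing.isZmodule.Build quot addqA addqC add0q addNq.

Definition one : quot := \pi_quot 1.
Definition mul : quot -> quot -> quot := locked (fun a b => \pi_quot (repr a * repr b)).

Lemma pi_mul x y : \pi_quot (x * y) = mul (\pi_quot x) (\pi_quot y).
Proof.
rewrite /mul -lock; apply: pieq.
have -> : x * y - repr (\pi_quot x) * repr (\pi_quot y) =
   - (y * (repr (\pi_quot x) - x)) - (repr (\pi_quot x) * (repr (\pi_quot y) - y)).
  by ring.
by apply: ID; apply: IN; apply: IM; apply: reprI.
Qed.

Lemma mulqA: associative mul.
Proof.
move=> x y z; elim/quotW: x => a; elim/quotW: y => b; elim/quotW: z => c.
by rewrite -!pi_mul mulrA.
Qed.
Lemma mulqC: commutative mul.
Proof. by move=> x y; elim/quotW: x => a; elim/quotW: y => b; rewrite -!pi_mul mulrC. Qed.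
Lemma mul1q: left_id one mul.
Proof. by move=> x; elim/quotW: x => a; rewrite /one -!pi_mul mul1r. Qed.
Lemma mulq_addl: left_distributive mul add.
Proof.
move=> x y z; elim/quotW: x => a; elim/quotW: y => b; elim/quotW: z => c.
by rewrite -!pi_add -!pi_mul -pi_add mulrDl.
Qed.

HB.instance Definition _ := GRing.Zmodule_isComPzRing.Build quot mulqA mulqC mul1q mulq_addl.

Definition piq (x : R) : quot := \pi_quot x.

Lemma piq_zmod : zmod_morphism piq.
Proof. by move=> x y; rewrite /piq pi_add pi_opp. Qed.
Lemma piq_monoid : monoid_morphism piq.
Proof. by split => // x y; rewrite /piq pi_mul. Qed.

Lemma piq0 x : piq x = 0 <-> I x.
Proof.
split=> [/eqP|h]; last by apply: pieq; rewrite subr0.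
by move=> /pieqP; rewrite subr0.
Qed.

Lemma piq_surj (a : quot) : exists x, piq x = a.
Proof. by exists (repr a); rewrite /piq reprK. Qed.
End Q.

Lemma piqD R (J : ideal_pack R) x y : piq J (x + y) = piq J x + piq J y.
Proof. by rewrite /piq pi_add. Qed.
Lemma piqM R (J : ideal_pack R) x y : piq J (x * y) = piq J x * piq J y.
Proof. by rewrite /piq pi_mul. Qed.
Lemma piq1 R (J : ideal_pack R) : piq J 1 = 1.
Proof. by []. Qed.

Local Close Scope quotient_scope.

Section Ideal.
Variables (T : tower) (I0 : tw_ring T 0 -> Prop).
Local Notation E i := (@ext_ideal T I0 i).

Lemma E_0 i : E i 0.
Proof. by exists [::]; split => //; rewrite big_nil. Qed.

Lemma E_D i x y : E i x -> E i y -> E i (x + y).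
Proof.
move=> [s [hs ->]] [t [ht ->]]; exists (s ++ t); split; last by rewrite big_cat.
by move=> u; rewrite mem_cat => /orP [] ?; [apply: hs | apply: ht].
Qed.

Lemma E_M i a x : E i x -> E i (a * x).
Proof.
move=> [s [hs ->]]; exists (map (fun u => (a * u.1, u.2)) s); split.
  by move=> u /mapP [v hv ->] /=; exact: hs.
by rewrite big_map mulr_sumr; apply: eq_bigr => u _; rewrite mulrA.
Qed.

Lemma E_N i x : E i x -> E i (- x).
Proof. by move=> h; rewrite -mulN1r; apply: E_M. Qed.

Lemma E_B i x y : E i x -> E i y -> E i (x - y).
Proof. by move=> h1 h2; apply: E_D => //; apply: E_N. Qed.

Lemma E_map i x : E i x -> E i.+1 (tw_map T i x).
Proof.
move=> [s [hs ->]]; exists (map (fun u => (tw_map T i u.1, u.2)) s); split.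
  by move=> u /mapP [v hv ->] /=; exact: hs.
by rewrite big_map rmorph_sum; apply: eq_bigr => u _; rewrite rmorphM.
Qed.

Lemma E_base x : I0 x -> E 0 x.
Proof.
move=> h; exists [:: (1, x)]; split; first by move=> u; rewrite inE => /eqP ->.
by rewrite big_seq1 mul1r.
Qed.

Lemma E_sum i (J : Type) (r : seq J) (P : pred J) (F : J -> tw_ring T i) :
  (forall j, P j -> E i (F j)) -> E i (\sum_(j <- r | P j) F j).
Proof. by move=> h; apply: big_ind => //; [apply: E_0 | apply: E_D]. Qed.

Lemma E_nat (p : nat) i : I0 p%:R -> E i p%:R.
Proof.
move=> h; elim: i => [|i IH]; first by apply: E_base.
by have := E_map IH; rewrite rmorph_nat.
Qed.

Lemma E_pmul (p : nat) i x n : I0 p%:R -> (p %| n)%N -> E i (x *+ n).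
Proof.
move=> hp /dvdnP [k ->]; rewrite mulrnA -mulr_natr.
by apply: E_M; apply: E_nat.
Qed.

Lemma E_frob_add (p : nat) i (x y : tw_ring T i) : prime p -> I0 p%:R ->
  E i ((x + y) ^+ p - x ^+ p - y ^+ p).
Proof.
move=> pp hp; case: p pp hp => [//|n] pp hp.
rewrite exprDn big_ord_recl big_ord_recr /=.
set S := \sum_(j < n) _.
rewrite subn0 expr0 mulr1 bin0 mulr1n subnn expr0 mul1r binn mulr1n.
have -> : x ^+ n.+1 + (S + y ^+ n.+1) - x ^+ n.+1 - y ^+ n.+1 = S by ring.
apply: E_sum => j _; apply: (E_pmul _ hp); apply: prime_dvd_bin => //.
by rewrite /= ltnS ltn_ord.
Qed.

Lemma E_pow i (a b : tw_ring T i) n : E i (a - b) -> E i (a ^+ n - b ^+ n).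
Proof. by move=> h; rewrite subrXX mulrC; apply: E_M. Qed.

Local Notation rad i := (@rad_ext_ideal T I0 i).

Lemma E_powup i (x : tw_ring T i) n k : E i (x ^+ n) -> E i (x ^+ (n + k)).
Proof. by move=> h; rewrite exprD mulrC; apply: E_M. Qed.

Lemma rad_E i x : E i x -> rad i x.
Proof. by move=> h; exists 1%N; rewrite expr1. Qed.

Lemma rad_0 i : rad i 0.
Proof. by apply: rad_E; apply: E_0. Qed.

Lemma rad_M i a x : rad i x -> rad i (a * x).
Proof. by move=> [n h]; exists n; rewrite exprMn; apply: E_M. Qed.

Lemma rad_D i x y : rad i x -> rad i y -> rad i (x + y).
Proof.
move=> [n hn] [m hm]; exists (n + m)%N; rewrite exprDn.
apply: E_sum => j _; rewrite -mulr_natl; apply: E_M.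
case: (leqP m j) => hj.
  apply: E_M.
  by have := E_powup (j - m) hm; rewrite subnKC.
have hj' : (n <= n + m - j)%N.
  by rewrite -addnBA ?leq_addr // ltnW.
rewrite mulrC; apply: E_M.
by have := E_powup (n + m - j - n) hn; rewrite subnKC.
Qed.
End Ideal.

Unset Implicit Arguments.

Section Main.
Variables (p : nat) (T : tower) (I0 : tw_ring T 0 -> Prop).
Local Notation E i := (@ext_ideal T I0 i).
Local Notation rad i := (@rad_ext_ideal T I0 i).
Hypotheses (pp : prime p) (hp : I0 p%:R)
 (hb : forall i (x : tw_ring T i), E i.+1 (tw_map T i x) -> E i x)
 (fs : @frobenius_projections_surjective p T I0).
Variable g : forall i, tw_ring T i.+1 -> tw_ring T i.
Hypothesis hg : forall i y, E i.+1 (y ^+ p - tw_map T i (g i y)).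

Fixpoint G i : tw_ring T i -> tw_ring T 0 :=
  match i as j return tw_ring T j -> tw_ring T 0 with
  | 0 => fun x => x
  | j.+1 => fun y => G j (g j y)
  end.

Definition J0 : ideal_pack (tw_ring T 0) :=
  IdealPack (@rad_0 T I0 0) (@rad_D T I0 0) (@rad_M T I0 0).

Definition A := quot J0.

Definition th i (x : tw_ring T i) : A := piq J0 (G i x).

Lemma thP i :
 [/\ forall x y, th i (x + y) = th i x + th i y,
     th i 1 = 1,
     forall x y, th i (x * y) = th i x * th i y,
     forall x, th i x = 0 <-> rad i x &
     forall a, exists x, th i x = a].
Proof.
elim: i => [|i [hadd h1 hmul hker hsurj]].
  split.
  - by move=> x y; apply: piqD.
  - by apply: piq1.
  - by move=> x y; apply: piqM.
  - by move=> x; apply: piq0.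
  - by move=> a; apply: piq_surj.
have cong : forall a b, E i (a - b) -> th i a = th i b.
  move=> a b h; have := hadd (a - b) b; rewrite subrK => ->.
  by have /hker -> := rad_E h; rewrite add0r.
have thS : forall y, th i.+1 y = th i (g i y) by [].
split.
- move=> x y; rewrite !thS -hadd; apply: cong; apply: hb.
  rewrite rmorphB rmorphD /=.
  have -> : tw_map T i (g i (x + y)) - (tw_map T i (g i x) + tw_map T i (g i y)) =
    ((x + y) ^+ p - x ^+ p - y ^+ p) - ((x + y) ^+ p - tw_map T i (g i (x + y)))
     + (x ^+ p - tw_map T i (g i x)) + (y ^+ p - tw_map T i (g i y)) by ring.
  by apply: E_D; [apply: E_D|]; [apply: E_B|..]; rewrite ?hg //; apply: E_frob_add.
- rewrite thS -h1; apply: cong; apply: hb; rewrite rmorphB rmorph1 /=.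
  have -> : tw_map T i (g i 1) - 1 = - (1 ^+ p - tw_map T i (g i 1)) + (1 ^+ p - 1) by ring.
  by apply: E_D; [apply: E_N; apply: (hg i) | rewrite expr1n subrr; apply: E_0].
- move=> x y; rewrite !thS -hmul; apply: cong; apply: hb.
  rewrite rmorphB rmorphM /=.
  have -> : tw_map T i (g i (x * y)) - tw_map T i (g i x) * tw_map T i (g i y) =
    - ((x * y) ^+ p - tw_map T i (g i (x * y)))
     + (x ^+ p - tw_map T i (g i x)) * y ^+ p
     + tw_map T i (g i x) * (y ^+ p - tw_map T i (g i y)) by rewrite exprMn; ring.
  apply: E_D; [apply: E_D|]; [apply: E_N; apply: (hg i)| |apply: E_M; apply: (hg i)].
  by rewrite mulrC; apply: E_M; apply: (hg i).
- move=> y; rewrite thS hker; split.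
    move=> [n h]; exists (p * n)%N.
    have h1' := E_map h; rewrite rmorphXn in h1'.
    have h2 := E_pow n (hg i y); rewrite -exprM in h2.
    by have := E_D h2 h1'; rewrite subrK.
  move=> [n h]; exists n; apply: hb; rewrite rmorphXn.
  have h2 := E_pow n (hg i y); rewrite -exprM mulnC exprM in h2.
  have -> : tw_map T i (g i y) ^+ n = - ((y ^+ n) ^+ p - tw_map T i (g i y) ^+ n) + (y ^+ n) ^+ p by ring.
  apply: E_D; first by apply: E_N.
  case: p pp => [//|q] _; rewrite exprSr; apply: E_M; exact: h.
- move=> a; have [x hx] := hsurj a; have [y hy] := fs i x.
  exists y; rewrite thS -hx; apply: cong; apply: hb; rewrite rmorphB /=.
  have -> : tw_map T i (g i y) - tw_map T i x = - (y ^+ p - tw_map T i (g i y)) + (y ^+ p - tw_map T i x) by ring.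
  by apply: E_D => //; apply: E_N.
Qed.

Lemma thZ i : zmod_morphism (th i).
Proof.
have [hadd _ _ _ _] := thP i.
by move=> x y; have := hadd (x - y) y; rewrite subrK => ->; rewrite addrK.
Qed.

Lemma thM i : monoid_morphism (th i).
Proof. by have [_ h1 hmul _ _] := thP i; split. Qed.

Definition thm i : {rmorphism tw_ring T i -> A} :=
  HB.pack (th i) (GRing.isZmodMorphism.Build _ _ (th i) (thZ i))
    (GRing.isMonoidMorphism.Build _ _ (th i) (thM i)).

Lemma thF i x : thm i.+1 (tw_map T i x) = thm i x ^+ p.
Proof.
have [hadd _ _ hker _] := thP i.
have cong : forall a b, E i (a - b) -> th i a = th i b.
  move=> a b h; have := hadd (a - b) b; rewrite subrK => ->.
  by have /hker -> := rad_E h; rewrite add0r.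
rewrite -rmorphXn /=; have -> : th i.+1 (tw_map T i x) = th i (g i (tw_map T i x)) by [].
apply: cong; apply: hb; rewrite rmorphB rmorphXn /=.
have -> : tw_map T i (g i (tw_map T i x)) - tw_map T i x ^+ p =
   - (tw_map T i x ^+ p - tw_map T i (g i (tw_map T i x))) by ring.
by apply: E_N; apply: hg.
Qed.

Lemma main_perfect : @reduced_quotient_tower_is_perfect p T I0.
Proof.
exists A, thm; split.
- have [_ _ _ hker _] := thP 0.
  rewrite -(rmorph_nat (thm 0)); apply/hker; apply: rad_E; exact: E_base.
- move=> a n ha; have [_ _ _ hker hsurj] := thP 0.
  have [x hx] := hsurj a; rewrite -hx in ha *.
  have : thm 0 (x ^+ n) = 0 by rewrite rmorphXn.
  move=> /hker [m hm]; apply/hker; exists (n * m)%N; by rewrite exprM.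
- by move=> i a; have [_ _ _ _ hsurj] := thP i; apply: hsurj.
- by move=> i x; have [_ _ _ hker _] := thP i; apply: hker.
- by move=> i x; apply: thF.
Qed.
End Main.

Theorem proposition3p4 (p : nat) (T : tower) (I0 : tw_ring T 0 -> Prop) :
  prime p ->
  @purely_inseparable_tower p T I0 ->
  @frobenius_projections_surjective p T I0 ->
  @reduced_quotient_tower_is_perfect p T I0.
Proof.
move=> pp [hI hp hb hc] fs.
have [g hg] : exists g : forall i, tw_ring T i.+1 -> tw_ring T i,
    forall i y, @ext_ideal T I0 i.+1 (y ^+ p - tw_map T i (g i y)).
  exists (fun i y => proj1_sig (constructive_indefinite_description _ (hc i y))).
  by move=> i y; exact: (proj2_sig (constructive_indefinite_description _ (hc i y))).
exact: (@main_perfect p T I0 pp hp hb fs g hg).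
Qed.
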